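(* Let $G=(V,E)$ be a finite connected simple graph with adjacency matrix $A$, let $W\subseteq V$ be a nonempty set of marked vertices, let $\gamma>0$, and let $H=-\gamma A-\sum_{w\in W}|w\rangle\langle w|$ on $\mathcal{H}=\mathbb{C}^V$. Let $\phi_0$ be the largest eigenvalue of $A$ and $|\phi_0\rangle$ a normalized eigenvector of $A$ for $\phi_0$. Let $\lambda^-$ be the smallest eigenvalue of $H$ and $|\lambda^-\rangle$ an associated eigenvector. Then $\lambda^-$ is a simple eigenvalue of $H$, $\langle\lambda^-|\phi_0\rangle\neq0$, and $\lambda^-<-\gamma\phi_0$.
   Context: $\{|v\rangle: v\in V\}$ is the computational basis of $\mathcal{H}$. Since $G$ is connected, $\phi_0$ is a simple eigenvalue of $A$. *)

(* Defs.v *)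
From HB Require Import structures.
From mathcomp Require Import all_boot all_order all_algebra.
Set Implicit Arguments. Unset Strict Implicit. Unset Printing Implicit Defensive.
Import Order.TTheory GRing.Theory Num.Theory.
Local Open Scope ring_scope.

Definition simple_graph n (adj : rel 'I_n) : Prop :=
  symmetric adj /\ irreflexive adj.

Definition connected_graph n (adj : rel 'I_n) : Prop :=
  forall i j : 'I_n, connect adj i j.

Definition adjmx (C : numClosedFieldType) n (adj : rel 'I_n) : 'M[C]_n :=
  \matrix_(i, j) (adj i j)%:R.

Definition search_ham (C : numClosedFieldType) n (adj : rel 'I_n)
    (W : {set 'I_n}) (gamma : C) : 'M[C]_n :=
  - (gamma *: adjmx C adj) - \sum_(w in W) delta_mx w w.

(* vectors of C^n are row vectors 'rV_n; <u|v> = sum_i conj(u_i) v_i *)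
Definition braket (C : numClosedFieldType) n (u v : 'rV[C]_n) : C :=
  \sum_(i < n) (u 0 i)^* * v 0 i.

Definition simple_eigenvalue (F : fieldType) n (M : 'M[F]_n) (a : F) : bool :=
  eigenvalue M a && ~~ (('X - a%:P) ^+ 2 %| char_poly M).

(* Main.v *)
Require Import Defs.
From HB Require Import structures.
From mathcomp Require Import all_boot all_order all_algebra.
Set Implicit Arguments. Unset Strict Implicit. Unset Printing Implicit Defensive.
Import Order.TTheory GRing.Theory Num.Theory.
Local Open Scope ring_scope.
Local Open Scope sesquilinear_scope.

Lemma char_poly_conj (F : fieldType) n (P D : 'M[F]_n) : P \in unitmx ->
  char_poly (invmx P *m D *m P) = char_poly D.
Proof.
move=> Pu; rewrite /char_poly /char_poly_mx !map_mxM.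
set iP := map_mx polyC (invmx P); set P' := map_mx polyC P.
set D' := map_mx polyC D.
have h1 : iP *m P' = 1%:M by rewrite -map_mxM mulVmx // map_mx1.
have hX : ('X%:M : 'M[{poly F}]_n) = iP *m 'X%:M *m P'.
  by rewrite mul_mx_scalar -scalemxAl h1 scalemx1.
have h2 : P' *m iP = 1%:M by rewrite -map_mxM mulmxV // map_mx1.
rewrite hX -mulmxBl -mulmxBr !det_mulmx.
rewrite -hX mulrC mulrA -det_mulmx h2 det1 mul1r.
by [].
Qed.

Lemma char_poly_diag (F : fieldType) n (d : 'rV[F]_n) :
  char_poly (diag_mx d) = \prod_(i < n) ('X - (d 0 i)%:P).
Proof.
rewrite char_poly_trig ?diag_mx_is_trig //.
by apply: eq_bigr => i _; rewrite mxE eqxx mulr1n.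
Qed.

Definition qf (C : numClosedFieldType) n (M : 'M[C]_n) (x : 'rV[C]_n) :=
  (x *m M *m x^t* ) 0 0.
Definition nr (C : numClosedFieldType) n (x : 'rV[C]_n) := (x *m x^t* ) 0 0.

Lemma nrE (C : numClosedFieldType) n (x : 'rV[C]_n) :
  nr x = \sum_i x 0 i * (x 0 i)^*.
Proof. by rewrite /nr mxE; apply: eq_bigr => i _; rewrite !mxE. Qed.

Lemma nr_ge0 (C : numClosedFieldType) n (x : 'rV[C]_n) : 0 <= nr x.
Proof. by rewrite nrE sumr_ge0 // => i _; rewrite mul_conjC_ge0. Qed.

Lemma qfE (C : numClosedFieldType) n (M : 'M[C]_n) (x : 'rV[C]_n) :
  qf M x = \sum_i \sum_j x 0 i * M i j * (x 0 j)^*.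
Proof.
rewrite /qf mxE exchange_big; apply: eq_bigr => j _.
rewrite !mxE mulr_suml; apply: eq_bigr => i _; by rewrite ?mxE.
Qed.

Lemma qf_diag (C : numClosedFieldType) n (d : 'rV[C]_n) (y : 'rV[C]_n) :
  qf (diag_mx d) y = \sum_j d 0 j * (y 0 j * (y 0 j)^*).
Proof.
rewrite /qf mul_mx_diag mxE; apply: eq_bigr => j _.
by rewrite !mxE mulrCA mulrA.
Qed.

Lemma tr_conj_mul (C : numClosedFieldType) m k l (A : 'M[C]_(m, k)) (B : 'M[C]_(k, l)) :
  (A *m B)^t* = B^t* *m A^t*.
Proof. by rewrite trmx_mul map_mxM. Qed.

Section Spec.
Variables (C : numClosedFieldType) (n : nat) (M : 'M[C]_n).
Hypothesis Mh : M \is hermsymmx.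
Let P := spectralmx M.
Let d := spectral_diag M.

Lemma PPt : P *m P^t* = 1%:M.
Proof. exact/unitarymxP/spectral_unitarymx. Qed.

Lemma PtP : P^t* *m P = 1%:M.
Proof. by rewrite -invmx_unitary ?spectral_unitarymx // mulVmx // spectral_unit. Qed.

Lemma Mdec : M = P^t* *m diag_mx d *m P.
Proof.
rewrite -invmx_unitary ?spectral_unitarymx //.
exact/orthomx_spectralP/hermitian_normalmx.
Qed.

Lemma charM : char_poly M = \prod_(i < n) ('X - (d 0 i)%:P).
Proof.
rewrite {1}Mdec -invmx_unitary ?spectral_unitarymx //.
by rewrite char_poly_conj ?spectral_unit // char_poly_diag.
Qed.

Lemma d_real i : d 0 i \is Num.real.
Proof. by have /mxOverP := hermitian_spectral_diag_real Mh; apply. Qed.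

Lemma eigM a : eigenvalue M a -> exists i, a = d 0 i.
Proof.
rewrite eigenvalue_root_char charM.
rewrite -(big_map (fun i => d 0 i) xpredT (fun a => 'X - a%:P)).
by rewrite root_prod_XsubC => /mapP [i _ ->]; exists i.
Qed.

Lemma eig_d i : eigenvalue M (d 0 i).
Proof.
by rewrite eigenvalue_root_char charM (bigD1 i) //= rootM root_XsubC eqxx.
Qed.

Lemma rowP_eig i : row i P *m M = d 0 i *: row i P.
Proof.
rewrite -row_mul {1}Mdec !mulmxA PPt mul1mx mul_diag_mx.
by apply/rowP => j; rewrite !mxE.
Qed.


Lemma rows_orth (a b : 'I_n) : \sum_j P a j * (P b j)^* = (a == b)%:R.
Proof.
have := congr1 (fun X : 'M[C]_n => X a b) PPt; rewrite /= !mxE => <-.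
by apply: eq_bigr => j _; rewrite !mxE.
Qed.

Lemma qf_spec x : qf M x = qf (diag_mx d) (x *m P^t* ).
Proof.
rewrite /qf tr_conj_mul trmxCK {1}Mdec !mulmxA.
by [].
Qed.

Lemma nr_spec x : nr x = nr (x *m P^t* ).
Proof. by rewrite /nr tr_conj_mul trmxCK !mulmxA -(mulmxA x) PtP mulmx1. Qed.

Lemma rayleigh mu : (forall i, d 0 i <= mu) -> forall x, qf M x <= mu * nr x.
Proof.
move=> hd x; rewrite qf_spec nr_spec qf_diag nrE mulr_sumr.
by apply: ler_sum => j _; rewrite ler_wpM2r ?mul_conjC_ge0.
Qed.

Lemma rayleigh_eq mu : (forall i, d 0 i <= mu) -> forall x,
  qf M x = mu * nr x -> x *m M = mu *: x.
Proof.
move=> hd x; rewrite qf_spec nr_spec qf_diag nrE mulr_sumr.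
set y := x *m P^t*.
move/eqP; rewrite eq_sym -subr_eq0 -sumrB => /eqP h0.
have h1 j : (mu - d 0 j) * (y 0 j * (y 0 j)^* ) = 0.
  rewrite mulrBl; apply: (psumr_eq0P _ h0) => // i _.
  by rewrite -mulrBl mulr_ge0 ?mul_conjC_ge0 // subr_ge0.
have hy : y *m diag_mx d = mu *: y.
  apply/rowP => j; rewrite mul_mx_diag mxE [RHS]mxE.
  move/eqP: (h1 j); rewrite mulf_eq0 mul_conjC_eq0 subr_eq0.
  by case/orP => /eqP ->; rewrite ?mul0r ?mulr0 // mulrC.
have ex : x = y *m P by rewrite /y -mulmxA PtP mulmx1.
rewrite {1}Mdec ex !mulmxA -(mulmxA y) PPt mulmx1 hy.
by rewrite -scalemxAl.
Qed.

End Spec.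

Definition absv (C : numClosedFieldType) n (v : 'rV[C]_n) := \row_i `|v 0 i|.

Section PF.
Variables (C : numClosedFieldType) (n : nat) (M : 'M[C]_n) (adj : rel 'I_n) (mu : C).
Hypotheses (Mh : M \is hermsymmx) (Mnn : forall i j, 0 <= M i j)
 (Mpos : forall i j, adj i j -> 0 < M i j) (adjsym : symmetric adj)
 (conn : forall i j, connect adj i j)
 (mumax : forall a, eigenvalue M a -> a <= mu).

Let d := spectral_diag M.
Let hd i : d 0 i <= mu := mumax (eig_d Mh i).

Lemma qf_eig (v : 'rV[C]_n) : v *m M = mu *: v -> qf M v = mu * nr v.
Proof. by rewrite /qf /nr => ->; rewrite -scalemxAl mxE. Qed.

Lemma mu_real (v : 'rV[C]_n) : v != 0 -> v *m M = mu *: v -> mu \is Num.real.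
Proof.
move=> vn0 ev; have /eigM : eigenvalue M mu by apply/eigenvalueP; exists v.
by move=> /(_ Mh) [i ->]; apply: d_real.
Qed.

Lemma nr_abs (v : 'rV[C]_n) : nr (absv v) = nr v.
Proof.
rewrite !nrE; apply: eq_bigr => i _.
by rewrite mxE geC0_conj ?normr_ge0 // -expr2 normCK.
Qed.

Lemma PF_abs (v : 'rV[C]_n) : v != 0 -> v *m M = mu *: v -> absv v *m M = mu *: absv v.
Proof.
move=> vn0 ev; apply: (rayleigh_eq Mh hd).
apply/le_anti; rewrite rayleigh //=.
rewrite nr_abs -qf_eig //.
have hr : qf M v \is Num.real.
  by rewrite qf_eig // realM ?(mu_real vn0 ev) ?ger0_real ?nr_ge0.
apply: le_trans (real_ler_norm hr) _.
rewrite !qfE; apply: le_trans (ler_norm_sum _ _ _) _.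
apply: ler_sum => i _; apply: le_trans (ler_norm_sum _ _ _) _.
apply: ler_sum => j _.
rewrite /absv !mxE. have nM (x y : C) : `|x * y| = `|x| * `|y| by exact: normrM.
rewrite !nM norm_conjC geC0_conj ?normr_ge0 // (ger0_norm (Mnn i j)). 
exact: lexx.
Qed.

Lemma PF_nz (v : 'rV[C]_n) : v != 0 -> v *m M = mu *: v -> forall i, v 0 i != 0.
Proof.
move=> vn0 ev; have hu := PF_abs vn0 ev; set u := absv v in hu.
have step i j : adj i j -> u 0 i = 0 -> u 0 j = 0.
  move=> aij ui0.
  have : (u *m M) 0 i = 0 by rewrite hu mxE ui0 mulr0.
  rewrite mxE => hs.
  have hnn : forall k, xpredT k -> 0 <= u 0 k * M k i.
    by move=> k _; rewrite mulr_ge0 ?Mnn // mxE normr_ge0.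
  have /eqP := psumr_eq0P hnn hs (isT : xpredT j).
  rewrite mulf_eq0 => /orP [/eqP // | /eqP hM].
  rewrite adjsym in aij.
  by have := Mpos aij; rewrite hM ltxx.
have cl : closed adj [pred k | u 0 k == 0].
  move=> x y axy; rewrite !inE; apply/eqP/eqP; first exact: step.
  by apply: step; rewrite adjsym.
move=> i; apply/negP => /eqP vi0; move/negP: vn0; apply; apply/eqP/rowP => k.
have : u 0 i == 0 by rewrite mxE vi0 normr0.
rewrite -[u 0 i == 0]/(i \in [pred k | u 0 k == 0]) (closed_connect cl (conn i k)).
by rewrite inE mxE => /eqP /normr0_eq0 ->; rewrite mxE.
Qed.

Lemma PF_dep (v w : 'rV[C]_n) i0 : v != 0 -> v *m M = mu *: v -> w *m M = mu *: w ->
  w = (w 0 i0 / v 0 i0) *: v.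
Proof.
move=> vn0 ev ew; set c := w 0 i0 / v 0 i0.
have ez : (w - c *: v) *m M = mu *: (w - c *: v).
  by rewrite mulmxBl -scalemxAl ev ew scalerBr !scalerA mulrC.
apply/eqP; rewrite -subr_eq0; apply/negPn/negP => zn0.
have := PF_nz zn0 ez i0.
by rewrite !mxE /c divfK ?subrr ?eqxx // PF_nz.
Qed.


Lemma PF_phase (v : 'rV[C]_n) (i0 : 'I_n) : v != 0 -> v *m M = mu *: v ->
  exists2 c, c != 0 & v = c *: absv v.
Proof.
move=> vn0 ev; have vi0 := PF_nz vn0 ev i0.
have un0 : absv v != 0.
  apply/eqP => h; move: (congr1 (fun x : 'rV[C]_n => x 0 i0) h); rewrite !mxE.
  by move=> /normr0_eq0 /eqP; rewrite (negbTE vi0).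
exists (v 0 i0 / absv v 0 i0).
  by rewrite mulf_neq0 // invr_eq0 mxE normr_eq0.
exact: PF_dep un0 (PF_abs vn0 ev) ev.
Qed.

End PF.

Lemma herm_of (C : numClosedFieldType) n (M : 'M[C]_n) :
  (forall i j, M i j = M j i) -> (forall i j, M i j \is Num.real) ->
  M \is hermsymmx.
Proof.
move=> hs hr; apply/is_hermitianmxP; rewrite expr0 scale1r.
by apply/matrixP => i j; rewrite !mxE conj_Creal // hs.
Qed.

Lemma qfD (C : numClosedFieldType) n (A B : 'M[C]_n) x :
  qf (A + B) x = qf A x + qf B x.
Proof. by rewrite /qf mulmxDr mulmxDl mxE. Qed.

Lemma qfZ (C : numClosedFieldType) n (A : 'M[C]_n) a x :
  qf (a *: A) x = a * qf A x.
Proof. by rewrite /qf -scalemxAr -scalemxAl mxE. Qed.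

Lemma qf_eigv (C : numClosedFieldType) n (A : 'M[C]_n) a x :
  x *m A = a *: x -> qf A x = a * nr x.
Proof. by rewrite /qf /nr => ->; rewrite -scalemxAl mxE. Qed.

Lemma qf_delta (C : numClosedFieldType) n (w : 'I_n) (x : 'rV[C]_n) :
  qf (delta_mx w w) x = x 0 w * (x 0 w)^*.
Proof.
rewrite qfE (bigD1 w) //=.
have h2 : \sum_(i < n | i != w) \sum_(j < n) x 0 i * delta_mx w w i j * (x 0 j)^* = 0.
  apply: big1 => i niw; apply: big1 => j _.
  by rewrite mxE (negbTE niw) /= mulr0 mul0r.
rewrite h2 addr0 (bigD1 w) //=.
have h3 : \sum_(j < n | j != w) x 0 w * delta_mx w w w j * (x 0 j)^* = 0.
  apply: big1 => j njw.
  by rewrite mxE eqxx (negbTE njw) /= mulr0 mul0r.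
by rewrite h3 addr0 mxE !eqxx /= mulr1.
Qed.

Lemma qf_sum (C : numClosedFieldType) n (W : {set 'I_n}) (F : 'I_n -> 'M[C]_n) x :
  qf (\sum_(w in W) F w) x = \sum_(w in W) qf (F w) x.
Proof. by rewrite /qf mulmx_sumr mulmx_suml summxE. Qed.

Theorem proposition3 (C : numClosedFieldType) (n : nat) (adj : rel 'I_n)
  (W : {set 'I_n}) (gamma phi0 lam : C) (phi0v lamv : 'rV[C]_n) :
  simple_graph adj -> connected_graph adj ->
  W != set0 -> 0 < gamma ->
  (* phi0 is the largest eigenvalue of A, with normalized eigenvector phi0v *)
  eigenvalue (adjmx C adj) phi0 ->
  (forall a, eigenvalue (adjmx C adj) a -> a <= phi0) ->
  phi0v *m adjmx C adj = phi0 *: phi0v -> braket phi0v phi0v = 1 ->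
  (* lam is the smallest eigenvalue of H, with eigenvector lamv *)
  eigenvalue (search_ham adj W gamma) lam ->
  (forall a, eigenvalue (search_ham adj W gamma) a -> lam <= a) ->
  lamv != 0 -> lamv *m search_ham adj W gamma = lam *: lamv ->
  [/\ simple_eigenvalue (search_ham adj W gamma) lam,
      braket lamv phi0v != 0 &
      lam < - gamma * phi0].
Proof.
move=> [asym airr] conn Wn0 g0 eigA maxA ephi nphi eigH minH lamn elam.
set A := adjmx C adj in eigA maxA ephi *.
set H := search_ham adj W gamma in eigH minH elam *.
set S := \sum_(w in W) (delta_mx w w : 'M[C]_n).
set M := gamma *: A + S.
have eHM : H = - M by rewrite /H /search_ham /M opprD.
have [w0 w0W] : exists w, w \in W.
  by case/set0Pn: Wn0 => w hw; exists w.
have Sij i j : S i j = \sum_(w in W) ((i == w) && (j == w))%:R.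
  by rewrite /S summxE; apply: eq_bigr => w _; rewrite mxE.
have Aij i j : A i j = (adj i j)%:R by rewrite mxE.
have Mij i j : M i j = gamma * (adj i j)%:R + \sum_(w in W) ((i == w) && (j == w))%:R.
  by rewrite !mxE Sij.
have Mnn i j : 0 <= M i j.
  rewrite Mij; apply: addr_ge0; first by rewrite mulr_ge0 ?ler0n ?ltW.
  by apply: sumr_ge0 => w _; rewrite ler0n.
have Msym i j : M i j = M j i.
  rewrite !Mij (asym i j); congr (_ + _); apply: eq_bigr => w _.
  by rewrite andbC.
have Mpos i j : adj i j -> 0 < M i j.
  move=> aij; rewrite Mij aij mulr1; apply: lt_le_trans (_ : gamma <= _) => //.
  by rewrite lerDl; apply: sumr_ge0 => w _; rewrite ler0n.
have Mh : M \is hermsymmx.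
  by apply: herm_of => // i j; rewrite ger0_real.
have Hh : H \is hermsymmx.
  have nM i j : (- M) i j = - M i j by rewrite mxE.
  apply: herm_of => i j; rewrite eHM !nM; first by rewrite Msym.
  by rewrite rpredN ger0_real.
have Annn i j : 0 <= A i j by rewrite Aij ler0n.
have Apos i j : adj i j -> 0 < A i j by move=> aij; rewrite Aij aij ltr01.
have Ah : A \is hermsymmx.
  apply: herm_of => i j; first by rewrite !Aij asym.
  by rewrite ger0_real.
have conn' : forall i j, connect adj i j by [].
have emM : lamv *m M = - lam *: lamv.
  by rewrite -[M]opprK -eHM mulmxN elam scaleNr.
have Mmax a : eigenvalue M a -> a <= - lam.
  move=> /eigenvalueP [v ev vn0]; rewrite lerNr; apply: minH.
  by apply/eigenvalueP; exists v => //; rewrite eHM mulmxN ev scaleNr.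
have phin : phi0v != 0.
  apply/eqP => h; move: nphi; rewrite h /braket big1 => [/eqP|i _].
    by rewrite eq_sym oner_eq0.
  by rewrite mxE mulr0.
have nrphi : nr phi0v = 1.
  by rewrite nrE -nphi /braket; apply: eq_bigr => i _; rewrite mulrC.
split.
-
  rewrite /simple_eigenvalue eigH /=; apply/negP => hdiv.
  set P := spectralmx H.
  have [i ei] := eigM Hh eigH.
  rewrite (charM Hh) (bigD1 i) //= -ei expr2 in hdiv.
  rewrite dvdp_mul2l ?polyXsubC_eq0 // dvdp_XsubCl /root horner_prod in hdiv.
  case/prodf_eq0: hdiv => k nki; rewrite hornerXsubC subr_eq0 => /eqP ek.
  have erow j : row j P *m M = - spectral_diag H 0 j *: row j P.
    by rewrite -[M]opprK -eHM mulmxN rowP_eig // scaleNr.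
  have eri : row i P *m M = - lam *: row i P by rewrite erow -ei.
  have erk : row k P *m M = - lam *: row k P by rewrite erow -ek.
  have rin0 : row i P != 0.
    apply/eqP => h; have := rows_orth H i i; rewrite eqxx big1 => [/eqP|j _].
      by rewrite eq_sym oner_eq0.
    have := congr1 (fun x : 'rV[C]_n => x 0 j) h; rewrite !mxE => ->.
    by rewrite mul0r.
  have ekc := PF_dep Mh Mnn Mpos asym conn' Mmax i rin0 eri erk.
  set c := _ / _ in ekc.
  have ePk j : P k j = c * P i j.
    by have := congr1 (fun x : 'rV[C]_n => x 0 j) ekc; rewrite !mxE.
  have c0 : c = 0.
    have := rows_orth H k i; rewrite (negbTE nki) /=.
    under eq_bigr => j _ do rewrite ePk -mulrA.
    by rewrite -mulr_sumr rows_orth eqxx mulr1.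
  have := rows_orth H k k; rewrite eqxx big1 => [/eqP|j _].
    by rewrite eq_sym oner_eq0.
  by rewrite ePk c0 !mul0r.
-
  have [c1 c1n e1] := PF_phase Mh Mnn Mpos asym conn' Mmax w0 lamn emM.
  have [c2 c2n e2] := PF_phase Ah Annn Apos asym conn' maxA w0 phin ephi.
  have p1 := PF_nz Mh Mnn Mpos asym conn' Mmax lamn emM.
  have p2 := PF_nz Ah Annn Apos asym conn' maxA phin ephi.
  rewrite /braket e1 e2 /absv.
  under eq_bigr => i _ do rewrite !mxE rmorphM /= (geC0_conj (normr_ge0 _)) mulrACA.
  rewrite -mulr_sumr !mulf_neq0 ?conjC_eq0 //.
  apply/eqP => h0.
  have hnn : forall i, xpredT i -> 0 <= `|lamv 0 i| * `|phi0v 0 i|.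
    by move=> i _; rewrite mulr_ge0 ?normr_ge0.
  have hw := @psumr_eq0P _ _ xpredT (fun i => `|lamv 0 i| * `|phi0v 0 i|) hnn h0 w0 isT.
  move/eqP: hw.
  by rewrite mulf_eq0 !normr_eq0 (negbTE (p1 w0)) (negbTE (p2 w0)).
-
  have hr := rayleigh Mh (fun i => Mmax _ (eig_d Mh i)) phi0v.
  rewrite nrphi mulr1 /M qfD qfZ (qf_eigv ephi) nrphi mulr1 qf_sum in hr.
  have p2 := PF_nz Ah Annn Apos asym conn' maxA phin ephi.
  rewrite mulNr ltrNr; apply: lt_le_trans hr.
  rewrite ltrDl (bigD1 w0) //=.
  apply: (@lt_le_trans _ _ (qf (delta_mx w0 w0) phi0v)).
    by rewrite qf_delta mul_conjC_gt0 p2.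
  by rewrite lerDl sumr_ge0 // => w _; rewrite qf_delta mul_conjC_ge0.
Qed.
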